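(* Let $p>2$ be a prime and $d>0$ an integer with $d\not\equiv 0\pmod p$, and suppose $-1\in QR_p$. Let $N_p$ be the number of solutions $(x,y)\in\mathbb{Z}_p\times\mathbb{Z}_p$ of $$y^2\equiv x^3-d^2x \pmod p,$$ and let $n_1$ be the number of distinct fourth powers $u=y^4\in\mathbb{Z}_p^*$ ($y\in\mathbb{Z}_p^*$) such that $u-1\in QR_p$. Then $$N_p=8n_1+7 \text{ if } d\in QR_p,\qquad N_p=-8n_1+2p-7 \text{ if } d\in QNR_p .$$
   Context: $\mathbb{Z}_p$ denotes the integers modulo $p$, $\mathbb{Z}_p^*=\{1,\dots,p-1\}$. $QR_p=\{x\in\mathbb{Z}_p^*: \exists y\in\mathbb{Z}_p^*,\ y^2\equiv x \pmod p\}$ is the set of nonzero quadratic residues modulo $p$ and $QNR_p=\mathbb{Z}_p^*\setminus QR_p$ the set of quadratic nonresidues; $d$ is regarded as an element of $\mathbb{Z}_p^*$ via reduction mod $p$. *)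

(* Defs.v *)
From mathcomp Require Import all_boot all_algebra.
Set Implicit Arguments. Unset Strict Implicit. Unset Printing Implicit Defensive.

(* Residues mod p are represented by 'I_p (values 0..p-1); arithmetic is on nat mod p. *)

Definition QR (p x : nat) : bool :=
  (x %% p != 0) && [exists y : 'I_p, (y != 0 :> nat) && ((y * y) %% p == x %% p)].

Definition QNR (p x : nat) : bool := (x %% p != 0) && ~~ QR p x.

Definition Np (p d : nat) : nat :=
  #|[set xy : 'I_p * 'I_p |
      ((xy.2 : nat) ^ 2 + d ^ 2 * xy.1 == (xy.1 : nat) ^ 3 %[mod p])]|.

Definition n1 (p : nat) : nat :=
  #|[set u : 'I_p | [exists y : 'I_p, (y != 0 :> nat) && ((y : nat) ^ 4 %% p == u)]
                   && QR p (u + p - 1)]|.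

(* Main.v *)
Require Import Defs.
From mathcomp Require Import all_boot all_algebra zify ring.
Set Implicit Arguments. Unset Strict Implicit. Unset Printing Implicit Defensive.
Import GRing.Theory.

Lemma two_to_one (T U : finType) (S : {set T}) (V : {set U}) (g : T -> U) (s : T -> T) :
 (forall x, x \in S -> g x \in V) ->
 (forall u, u \in V -> exists2 x, x \in S & g x = u) ->
 (forall x, x \in S -> [/\ s x \in S, s x != x & g (s x) = g x]) ->
 (forall x y, x \in S -> y \in S -> g x = g y -> y = x \/ y = s x) ->
 #|S| = 2 * #|V|.
Proof.
move=> gV surj sS inj.
rewrite -!sum1_card (partition_big g (mem V)) //= big_distrr /=.
apply: eq_bigr => u uV.
have [x xS gx] := surj u uV.
have [sxS sxx gsx] := sS x xS.
rewrite sum1_card (@eq_card _ _ [set x; s x]).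
  by rewrite cards2 eq_sym sxx muln1.
  move=> y; rewrite !inE /=; apply/andP/orP.
    by case=> yS /eqP gy; case: (inj x y xS yS (etrans gx (esym gy))) => ->; [left|right].
  by case=> /eqP ->; split => //; rewrite ?gsx gx.
Qed.

Local Open Scope ring_scope.



Section FF.
Variable F : finFieldType.
Hypothesis two_nz : (2 : F) != 0.

Definition sq (a : F) : bool := (a != 0) && [exists y, y * y == a].

Lemma sq_sqr (x : F) : x != 0 -> sq (x * x).
Proof. by move=> x0; rewrite /sq mulf_neq0 //=; apply/existsP; exists x. Qed.

Lemma sqP a : sq a -> exists2 y, y != 0 & a = y * y.
Proof.
case/andP=> a0 /existsP[y /eqP ya]; exists y => //.
by apply: contraNneq a0 => y0; rewrite -ya y0 mul0r.
Qed.

Lemma sq_neq0 a : sq a -> a != 0.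
Proof. by case/andP. Qed.

Lemma neg_neq (x : F) : x != 0 -> - x != x.
Proof.
move=> x0; apply/negP => /eqP h.
have : x *+ 2 = 0 by rewrite mulr2n -{1}h addNr.
by move/eqP; rewrite -mulr_natl mulf_eq0 (negPf two_nz) (negPf x0).
Qed.

Lemma sqr_inj (x y : F) : x * x = y * y -> y = x \/ y = - x.
Proof.
move=> h; have : (y ^+ 2 == x ^+ 2) by rewrite !expr2 h.
by rewrite eqf_sqr => /orP[] /eqP ->; [left|right].
Qed.

Lemma card_sq : #|[set x : F | x != 0]| = (2 * #|[set a | sq a]|)%N.
Proof.
apply: (@two_to_one F F _ _ (fun x : F => x * x) (fun x => - x)).
- by move=> x; rewrite !inE => x0; apply: sq_sqr.
- move=> u; rewrite inE => /sqP[y y0 ->]; exists y => //; by rewrite inE.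
- move=> x; rewrite !inE => x0; split; rewrite ?oppr_eq0 ?neg_neq ?mulrNN //.
- by move=> x y _ _ /sqr_inj.
Qed.

Lemma sq_mulS (a b : F) : sq a -> b != 0 -> sq (a * b) = sq b.
Proof.
move=> /sqP[u u0 ->] b0; apply/idP/idP.
- case/sqP=> w w0 h; apply/andP; split => //; apply/existsP; exists (w / u); apply/eqP.
  by rewrite mulrACA -invfM -h mulrAC divff ?mul1r // mulf_neq0.
- by case/sqP=> v v0 ->; rewrite mulrACA; apply: sq_sqr; rewrite mulf_neq0.
Qed.

Lemma card_ns : #|[set x : F | (x != 0) && ~~ sq x]| = #|[set x | sq x]|.
Proof.
have h := cardsID [set x : F | sq x] [set x : F | x != 0].
have e1 : [set x : F | x != 0] :&: [set x | sq x] = [set x | sq x].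
  by apply/setP => x; rewrite !inE; case: (boolP (sq x)) => [/sq_neq0 ->|]; rewrite ?andbF.
have e2 : [set x : F | x != 0] :\: [set x | sq x] = [set x | (x != 0) && ~~ sq x].
  by apply/setP => x; rewrite !inE andbC.
move: h; rewrite e1 e2 card_sq mul2n -addnn; move/addnI ->. by [].
Qed.

Lemma sq_mul (a b : F) : a != 0 -> b != 0 -> sq (a * b) = (sq a == sq b).
Proof.
move=> a0 b0.
case: (boolP (sq a)) => sa; first by rewrite sq_mulS // eq_sym eqb_id.
case: (boolP (sq b)) => sb; first by rewrite mulrC sq_mulS // (negPf sa).
rewrite /=.
set SQ := [set x : F | sq x]; set NS := [set x : F | (x != 0) && ~~ sq x].
set I := [set a * x | x in SQ].
have cI : #|I| = #|SQ| by rewrite card_imset //; apply: mulfI.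
have sub : I \subset NS.
  apply/subsetP => y /imsetP[x]; rewrite !inE => sx ->.
  by rewrite mulf_neq0 ?(sq_neq0 sx) //= mulrC sq_mulS.
have /eqP eI : I == NS by rewrite eqEcard sub /= cI card_ns.
have : b \in I by rewrite eI !inE b0 sb.
case/imsetP => x; rewrite inE => sx ->.
by rewrite mulrA sq_mulS ?sq_sqr // (sq_neq0 sx).
Qed.

Lemma card_roots (c : F) : c != 0 -> #|[set x : F | x^+3 - c^+2 * x == 0]| = 3%N.
Proof.
move=> c0.
have -> : [set x : F | x^+3 - c^+2 * x == 0] = 0 |: [set c; -c].
  apply/setP => x; rewrite !inE.
  have -> : x^+3 - c^+2 * x = x * ((x - c) * (x + c)) by ring.
  by rewrite !mulf_eq0 subr_eq0 addr_eq0.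
have h1 : (0 == c) = false by rewrite eq_sym (negPf c0).
have h2 : (0 == - c) = false by rewrite eq_sym oppr_eq0 (negPf c0).
have h3 : (c != - c) by rewrite eq_sym neg_neq.
by rewrite cardsU1 cards2 !inE h1 h2 h3.

Qed.

Lemma card_scale (c : F) (P : pred F) : c != 0 ->
  #|[set x | P (c * x)]| = #|[set x | P x]|.
Proof.
move=> c0.
have -> : [set x | P x] = [set c * x | x in [set x | P (c * x)]].
  apply/setP => y; rewrite inE; apply/idP/imsetP.
    by move=> Py; exists (y / c); rewrite ?inE mulrC divfK.
  by case=> x; rewrite inE => Px ->.
by rewrite card_imset //; apply: mulfI.
Qed.

Lemma card_curve (h : F -> F) :
  #|[set xy : F * F | xy.2 * xy.2 == h xy.1]| =
  addn #|[set x | h x == 0]| (muln 2 #|[set x | sq (h x)]|).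
Proof.
set A := [set xy : F * F | xy.2 * xy.2 == h xy.1].
rewrite -(cardsID [set xy : F * F | xy.2 == 0] A).
congr (_ + _)%N.
  have -> : A :&: [set xy : F * F | xy.2 == 0] = [set (x, (0:F)) | x in [set x | h x == 0]].
    apply/setP => [[x y]]; rewrite !inE /=; apply/andP/imsetP.
      by case=> /eqP e /eqP y0; subst y; exists x; rewrite // inE -e mul0r.
    by case=> x'; rewrite inE => /eqP hx [-> ->]; rewrite mul0r hx.
  by rewrite card_imset // => a b [].
apply: (@two_to_one (prod F F) F _ _ (fun xy => xy.1) (fun xy => (xy.1, - xy.2))).
- move=> [x y]; rewrite !inE /= => /andP[y0 /eqP <-]; exact: sq_sqr.
- move=> u; rewrite inE => /sqP[y y0 e]; exists (u, y) => //.
  by rewrite !inE /= y0 e eqxx.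
- move=> [x y]; rewrite !inE /= => /andP[y0 e]; split => //.
    by rewrite oppr_eq0 y0 mulrNN.
  by rewrite xpair_eqE eqxx /= neg_neq.
- move=> [x y] [x' y']; rewrite !inE /= => /andP[_ /eqP e] /andP[_ /eqP e'] ex.
  subst x'; case: (@sqr_inj y y'); first by rewrite e e'.
  by move=> ->; left. by move=> ->; right.
Qed.


Lemma sq0 : sq 0 = false. Proof. by rewrite /sq eqxx. Qed.

Lemma cnt_scale (d : F) : d != 0 ->
  #|[set x | sq (x^+3 - d^+2 * x)]| =
  if sq d then #|[set t | sq (t^+3 - t)]|
  else subn (subn #|F| 3) #|[set t : F | sq (t^+3 - t)]|.
Proof.
move=> d0.
rewrite -(card_scale (fun x => sq (x^+3 - d^+2 * x)) d0).
have e : forall t, (d * t)^+3 - d^+2 * (d * t) = (d * (d * d)) * (t^+3 - t) by move=> t; ring.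
have sd3 : sq (d * (d * d)) = sq d by rewrite mulrC sq_mulS // sq_sqr.
have dd : d * (d * d) != 0 by rewrite !mulf_neq0.
case: (boolP (sq d)) => sd.
  apply: eq_card => t; rewrite !inE e.
  have [->|f0] := eqVneq (t^+3 - t) 0; first by rewrite mulr0.
  by rewrite sq_mul // sd3 sd eq_sym eqb_id.
have -> : [set x | sq ((d * x)^+3 - d^+2 * (d * x))] =
          [set t | t^+3 - t != 0] :\: [set t | sq (t^+3 - t)].
  apply/setP => t; rewrite !inE e.
  have [->|f0] := eqVneq (t^+3 - t) 0; first by rewrite mulr0 sq0.
  by rewrite sq_mul // sd3 (negPf sd) /= eq_sym; case: (sq _).
have croots := card_roots (oner_neq0 F).
have hc := cardsC [set t : F | t^+3 - 1^+2 * t == 0].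
have e2 : ~: [set t : F | t^+3 - 1^+2 * t == 0] = [set t | t^+3 - t != 0].
  by apply/setP => t; rewrite !inE expr1n mul1r.
have hid := cardsID [set t : F | sq (t^+3 - t)] [set t | t^+3 - t != 0].
have e3 : [set t : F | t^+3 - t != 0] :&: [set t | sq (t^+3 - t)] = [set t | sq (t^+3 - t)].
  apply/setP => t; rewrite !inE; case: (boolP (sq _)) => [/sq_neq0 ->|]; by rewrite ?andbF.
rewrite e3 in hid; rewrite e2 croots in hc.
by rewrite -hc -hid !addKn.
Qed.


Lemma card_W : #|[set s : F | (s != 0) && (s * s != 1)]| = subn #|F| 3.
Proof.
have hc := cardsC [set t : F | t^+3 - 1^+2 * t == 0].
rewrite (card_roots (oner_neq0 F)) in hc.
have -> : [set s : F | (s != 0) && (s * s != 1)] = ~: [set t : F | t^+3 - 1^+2 * t == 0].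
  apply/setP => t; rewrite !inE.
  have -> : t^+3 - 1^+2 * t = t * (t * t - 1) by ring.
  by rewrite mulf_eq0 subr_eq0 negb_or.
by rewrite -hc addKn.
Qed.

Lemma card_S : #|[set xz : F * F | (xz.2 != 0) && (xz.2 * xz.2 == xz.1 * xz.1 - 1)]|
   = subn #|F| 3.
Proof.
rewrite -card_W.
pose h (s : F) := ((s + s^-1) / 2, (s^-1 - s) / 2).
set W := [set s : F | (s != 0) && (s * s != 1)].
have -> : [set xz : F * F | (xz.2 != 0) && (xz.2 * xz.2 == xz.1 * xz.1 - 1)] =
          h @: W.
  apply/setP => [[x z]]; rewrite !inE /=; apply/idP/imsetP.
  - case/andP => z0 /eqP e.
    have e1 : (x - z) * (x + z) = 1 by rewrite mulrDr !mulrBl e; ring.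
    have s0 : x - z != 0 by apply: contra_eq_neq e1 => ->; rewrite mul0r eq_sym oner_neq0.
    have ei : (x - z)^-1 = x + z by rewrite -[LHS]mulr1 -e1 mulrA mulVf // mul1r.
    exists (x - z); first rewrite /W inE s0 /=.
      apply: contra_neq z0 => e2.
      have : (x - z) * (x - z) = (x - z) * (x + z) by rewrite e1.
      move/(mulfI s0) => e3.
      have : 2 * z = (x + z) - (x - z) by ring.
      rewrite -e3 subrr => /eqP; rewrite mulf_eq0 (negPf two_nz) /= => /eqP.
      by [].
    rewrite /h ei; congr (_, _); field; exact: two_nz.
  - case=> s; rewrite /W inE => /andP[s0 s1] [-> ->].
    apply/andP; split.
      rewrite mulf_eq0 invr_eq0 negb_or two_nz andbT subr_eq0.
      apply: contra_neq s1 => e2; by rewrite -{1}e2 mulVf.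
    by apply/eqP; field; rewrite two_nz s0.
rewrite card_in_imset // => s s' /[!inE] /andP[s0 _] /andP[s0' _] e.
have : (h s).1 - (h s).2 = (h s').1 - (h s').2 by rewrite e.
rewrite /h /=.
have k : forall u : F, u != 0 -> (u + u^-1) / 2 - (u^-1 - u) / 2 = u.
  by move=> u u0; field; rewrite two_nz u0.
by rewrite !k.
Qed.


Hypothesis hi : sq (-1).

Lemma sq1 : sq 1. Proof. by rewrite -(mulr1 1) sq_sqr ?oner_neq0. Qed.

Lemma tt1 (t : F) : t * t - 1 == 0 -> sq t.
Proof.
rewrite subr_eq0 => /eqP e.
case: (@sqr_inj 1 t); first by rewrite mulr1 e.
  by move=> ->; exact: sq1.
by move=> ->.
Qed.

Lemma sqN (t : F) : sq (- t) = sq t.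
Proof.
have [->|t0] := eqVneq t 0; first by rewrite oppr0.
by rewrite -mulN1r sq_mulS.
Qed.

Lemma card_R : addn (muln 2 #|[set t : F | sq (t * t - 1)]|) 3 = #|F|.
Proof.
have := card_S.
set S := [set xz : F * F | _].
have -> : #|S| = muln 2 #|[set t : F | sq (t * t - 1)]|.
  apply: (@two_to_one (prod F F) F _ _ (fun xy => xy.1) (fun xy => (xy.1, - xy.2))).
  - move=> [x y]; rewrite !inE /= => /andP[y0 /eqP <-]; exact: sq_sqr.
  - move=> u; rewrite inE => /sqP[y y0 e]; exists (u, y) => //.
    by rewrite !inE /= y0 e eqxx.
  - move=> [x y]; rewrite !inE /= => /andP[y0 e]; split => //.
      by rewrite oppr_eq0 y0 mulrNN.
    by rewrite xpair_eqE eqxx /= neg_neq.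
  - move=> [x y] [x' y']; rewrite !inE /= => /andP[_ /eqP e] /andP[_ /eqP e'] ex.
    subst x'; case: (@sqr_inj y y'); first by rewrite e e'.
    by move=> ->; left. by move=> ->; right.
have hF : (3 <= #|F|)%N.
  by rewrite -(card_roots (oner_neq0 F)) max_card.
move=> ->; by rewrite subnK.
Qed.


Definition n1F := #|[set u : F | [exists y, (y != 0) && (y^+4 == u)] && sq (u - 1)]|.

Lemma cnt_K : #|[set t : F | sq (t^+3 - t)]| = addn (muln 4 n1F) 2.
Proof.
set K := [set t : F | sq (t^+3 - t)].
set SQ := [set t : F | sq t].
set A := [set t : F | sq t && sq (t * t - 1)].
set B := [set t : F | (t != 0) && ~~ sq t && sq (t * t - 1)].
set D := [set t : F | (t != 0) && ~~ sq t && ~~ sq (t * t - 1)].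
set R := [set t : F | sq (t * t - 1)].
set NS := [set t : F | (t != 0) && ~~ sq t].
set NZ := [set t : F | t != 0].
have ef : forall t : F, t^+3 - t = t * (t * t - 1) by move=> t; ring.
have hK : #|K| = addn #|A| #|D|.
  rewrite -(cardsID SQ K); congr addn; apply: eq_card => t; rewrite !inE ef.
    case: (boolP (sq t)) => st; rewrite ?andbF ?andbT //.
    have [->|f0] := eqVneq (t * t - 1) 0; first by rewrite mulr0.
    by rewrite sq_mulS.
  have [->|t0] := eqVneq t 0; first by rewrite mul0r sq0.
  case: (boolP (sq t)) => st //=.
  have [e|f0] := eqVneq (t * t - 1) 0; first by move: (tt1 (introT eqP e)); rewrite (negPf st).
  by rewrite sq_mul // (negPf st) eq_sym eqbF_neg.
have hA : #|A| = muln 2 n1F.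
  apply: (@two_to_one F F _ _ (fun t => t * t) (fun t => - t)).
  - move=> t; rewrite !inE => /andP[/sqP[y y0 ->] s1]; rewrite s1 andbT.
    by apply/existsP; exists y; rewrite y0 /=; apply/eqP; ring.
  - move=> u; rewrite inE => /andP[/existsP[y /andP[y0 /eqP e]] s1].
    exists (y * y); last by rewrite -e; ring.
    rewrite inE sq_sqr //=; have -> : y * y * (y * y) = y ^+ 4 by ring.
    by rewrite e.
  - move=> t; rewrite !inE => /andP[st s1]; split.
    + by rewrite sqN st mulrNN s1.
    + by apply: neg_neq; apply: sq_neq0.
    + by rewrite mulrNN.
  - by move=> x y _ _ /sqr_inj.
have hNS : #|NS| = addn #|B| #|D|.
  rewrite -(cardsID R NS); congr addn; apply: eq_card => t; by rewrite !inE // andbC.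
have hR : #|R| = addn 1 (addn #|A| #|B|).
  rewrite -(cardsID NZ R) addnC; congr addn.
    rewrite -(cards1 (0 : F)); apply: eq_card => t; rewrite !inE.
    by have [->|t0] := eqVneq t 0; rewrite /= ?mul0r ?sub0r ?hi.
  rewrite -(cardsID SQ); congr addn; apply: eq_card => t; rewrite !inE.
    by case: (boolP (sq t)) => st; rewrite ?andbF ?andbT //= (sq_neq0 st) andbT.
  by case: (sq t); rewrite ?andbF ?andbT //= andbC.
have hR2 := card_R.
have hns := card_ns.
have hsq := card_sq.
have hnz : #|NZ| = #|F|.-1 by rewrite -(cardsC1 (0:F)); apply: eq_card => t; rewrite !inE.
rewrite /NZ in hnz; rewrite hnz in hsq.
rewrite -/R in hR2; rewrite -/NS -/SQ in hns; rewrite -/SQ in hsq.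
move: hK hA hNS hR hR2 hns hsq.
set k := #|K|; set a := #|A|; set b := #|B|; set dd := #|D|; set r := #|R|.
set ns := #|NS|; set sqn := #|SQ|; set q := #|F|; set n := n1F.
move=> hK hA hNS hR hR2 hns hsq.
lia.
Qed.


Lemma K_le : leq (addn #|[set t : F | sq (t^+3 - t)]| 3) #|F|.
Proof.
have hc := cardsC [set t : F | t^+3 - 1^+2 * t == 0].
rewrite (card_roots (oner_neq0 F)) in hc.
rewrite -hc addnC leq_add2l; apply: subset_leq_card; apply/subsetP => t.
by rewrite !inE expr1n mul1r => /sq_neq0.
Qed.

Definition NF (d : F) := #|[set xy : F * F | xy.2 * xy.2 == xy.1^+3 - d^+2 * xy.1]|.

Lemma field_main (d : F) : d != 0 ->
  (sq d -> NF d = addn (muln 8 n1F) 7) /\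
  (~~ sq d -> addn (addn (NF d) (muln 8 n1F)) 7 = muln 2 #|F|).
Proof.
move=> d0.
have hN : NF d = addn 3 (muln 2 #|[set x | sq (x^+3 - d^+2 * x)]|).
  by rewrite /NF (card_curve (fun x => x^+3 - d^+2 * x)) card_roots.
have hs := cnt_scale d0.
have hK := cnt_K.
have hle := K_le.
move: hN hs hK hle.
set k := #|[set t : F | sq (t^+3 - t)]|.
set c := #|[set x | sq (x^+3 - d^+2 * x)]|.
set q := #|F|. set n := n1F.
move=> hN hs hK hle; split => sd; [rewrite sd in hs | rewrite (negPf sd) in hs]; lia.
Qed.

End FF.

Set Implicit Arguments. Unset Strict Implicit. Unset Printing Implicit Defensive.
Import GRing.Theory.
Local Open Scope ring_scope.

Section Br.
Variable p : nat.
Hypothesis pp : prime p.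

Lemma eqFp (m n : nat) : ((m%:R : 'F_p) == n%:R) = (m == n %[mod p])%N.
Proof. by rewrite -val_eqE /= !val_Fp_nat. Qed.

Lemma eqFp0 (m : nat) : ((m%:R : 'F_p) == 0) = (m %% p == 0)%N.
Proof. by rewrite -val_eqE /= val_Fp_nat. Qed.

Definition phi (i : 'I_p) : 'F_p := (i : nat)%:R.

Lemma psi_lt (a : 'F_p) : (val a < p)%N.
Proof. have h := ltn_ord a; by rewrite -[p in (_ < p)%N](Fp_cast pp). Qed.

Definition psi (a : 'F_p) : 'I_p := Ordinal (psi_lt a).

Lemma phiK : cancel phi psi.
Proof. by move=> i; apply: val_inj; rewrite /= val_Fp_nat // modn_small. Qed.

Lemma psiK : cancel psi phi.
Proof.
move=> a; apply: val_inj; rewrite /phi /= val_Fp_nat // modn_small //; exact: psi_lt.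
Qed.

Lemma phi0 (i : 'I_p) : (phi i == 0) = ((i : nat) == 0%N).
Proof. by rewrite eqFp0 modn_small. Qed.

Lemma exists_phi (P : pred 'F_p) : [exists i : 'I_p, P (phi i)] = [exists a, P a].
Proof.
apply/existsP/existsP => [[i Pi]|[a Pa]]; first by exists (phi i).
by exists (psi a); rewrite psiK.
Qed.

Lemma card_phi (T U : finType) (f : T -> U) (g : U -> T) (Q : pred U) :
  cancel f g -> cancel g f -> #|[set x | Q (f x)]| = #|[set y | Q y]|.
Proof.
move=> fK gK.
have -> : [set y | Q y] = f @: [set x | Q (f x)].
  apply/setP => y; rewrite inE; apply/idP/imsetP.
    by move=> Qy; exists (g y); rewrite ?inE gK.
  by case=> x; rewrite inE => Qx ->.
by rewrite card_imset //; apply: can_inj fK.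
Qed.

End Br.

Set Implicit Arguments. Unset Strict Implicit. Unset Printing Implicit Defensive.
Import GRing.Theory.
Local Open Scope ring_scope.

Section Br2.
Variable p : nat.
Hypothesis pp : prime p.

Lemma QR_sq (m : nat) : QR p m = sq (m%:R : 'F_p).
Proof.
rewrite /QR /sq eqFp0 //.
have [m0|m0] /= := eqVneq (m %% p)%N 0%N; first by [].
rewrite -(exists_phi pp); apply: eq_existsb => i.
rewrite /phi -natrM eqFp //.
have [i0|i0] /= := eqVneq (i : nat) 0%N; last by [].
by rewrite i0 /= mod0n eq_sym (negPf m0).
Qed.

Definition Phi (z : 'I_p * 'I_p) : 'F_p * 'F_p := (phi z.1, phi z.2).
Definition Psi (z : 'F_p * 'F_p) : 'I_p * 'I_p := (psi pp z.1, psi pp z.2).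
Lemma PhiK : cancel Phi Psi.
Proof. by move=> [x y]; rewrite /Phi /Psi /= !(phiK pp). Qed.
Lemma PsiK : cancel Psi Phi.
Proof. by move=> [x y]; rewrite /Phi /Psi /= !(psiK pp). Qed.

Lemma Np_F (d : nat) : Np p d = NF (d%:R : 'F_p).
Proof.
rewrite /NF -(card_phi _ PhiK PsiK); apply: eq_card => -[x y]; rewrite !inE /=.
rewrite -eqFp // natrD natrM !(@natrX (GRing.PzSemiRing.clone _ (fintype_ordinal__canonical__GRing_PzSemiRing (Zp_trunc (pdiv p))))).
by rewrite [RHS]eq_sym subr_eq expr2 addrC.
Qed.

Lemma n1_F : n1 p = n1F 'F_p.
Proof.
rewrite /n1F -(card_phi _ (phiK pp) (psiK pp)); apply: eq_card => u; rewrite !inE /=.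
congr andb.
  rewrite -(exists_phi pp); apply: eq_existsb => y.
  rewrite phi0 // /phi -natrX -[in RHS](modn_small (ltn_ord u)) eqFp //.
  by rewrite modn_mod (modn_small (ltn_ord u)).
rewrite QR_sq // natrB; last by rewrite addn_gt0 orbC (prime_gt0 pp).
by rewrite natrD pchar_Fp_0 // addr0.
Qed.
End Br2.

Set Implicit Arguments. Unset Strict Implicit. Unset Printing Implicit Defensive.
Import GRing.Theory.
Local Open Scope ring_scope.

Theorem lemma3 (p d : nat) :
  prime p -> (2 < p)%N -> (0 < d)%N -> (d %% p != 0)%N -> QR p (p - 1) ->
  (QR p d -> (Np p d)%:Z = 8 * (n1 p)%:Z + 7) /\
  (QNR p d -> (Np p d)%:Z = - 8 * (n1 p)%:Z + 2 * p%:Z - 7).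
Proof.
move=> pp p2 _ dnz hqr.
have two_nz : (2 : 'F_p) != 0 by rewrite eqFp0 // modn_small.
have hi : sq (-1 : 'F_p).
  by move: hqr; rewrite QR_sq // natrB ?(prime_gt0 pp) // pchar_Fp_0 // sub0r.
have dF0 : (d%:R : 'F_p) != 0 by rewrite eqFp0.
have [h1 h2] := field_main two_nz hi dF0.
rewrite (card_Fp pp) in h2.
rewrite Np_F // n1_F //.
set n := n1F 'F_p in h1 h2 *.
split.
  by rewrite QR_sq // => /h1 e; rewrite e; lia.
by rewrite /QNR QR_sq // => /andP[_ /h2 e]; lia.
Qed.
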